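(* Let $D$ be a second-order linear differential operator elliptic at ${\bf z}$, and let ${\bf X}=\{{\bf x}_1,\dots,{\bf x}_N\}$ with ${\bf x}_1={\bf z}$ be such that there exists a positive numerical differentiation formula for $Df({\bf z})$ on ${\bf X}$ that is exact of order $q\in\{3,4\}$. Then $\rho_{q,D}({\bf z},{\bf X},1,2)=\tau_D({\bf z}):=2\sum_{|\alpha|=1}c_{2\alpha}({\bf z})$.
   Context: $\Pi^d_q$: real polynomials in $d$ variables of total degree $<q$. $Df=\sum_{|\alpha|\le2}c_\alpha\partial^\alpha f$ with real coefficient functions; elliptic at ${\bf z}$ means $\sum_{|\alpha|=2}c_\alpha({\bf z})\xi^\alpha>0$ for all $\xi\ne0$. ${\bf X}$ consists of distinct points. A formula $Df({\bf z})\approx\sum_jw_jf({\bf x}_j)$ with ${\bf x}_1={\bf z}$ is positive if $w_1<0$ and $w_j>0$ for $j\ge2$; exact of order $q$ if $Dp({\bf z})=\sum_jw_jp({\bf x}_j)$ for all $p\in\Pi^d_q$. $\rho_{q,D}({\bf z},{\bf X},1,2):=\inf\{\sum_j|w_j|\,\|{\bf x}_j-{\bf z}\|_2^2:{\bf w}\text{ exact of order }q\}$. *)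

(* Defs.v *)
(* Real numbers are modelled by an arbitrary real field
   R : realFieldType (the statement is purely algebraic/order-theoretic). *)
From HB Require Import structures.
From mathcomp Require Import all_boot all_order all_algebra.
Set Implicit Arguments. Unset Strict Implicit. Unset Printing Implicit Defensive.
Import Order.TTheory GRing.Theory Num.Theory.
Local Open Scope ring_scope.

Section Defs.
Variables (R : realFieldType) (d : nat).

Definition coord (x : 'rV[R]_d) (i : 'I_d) : R := x ord0 i.

Definition mdeg (k : nat) (a : {ffun 'I_d -> 'I_k}) : nat := (\sum_(i < d) a i)%N.

Definition monom (k : nat) (b : {ffun 'I_d -> 'I_k}) (x : 'rV[R]_d) : R :=
  \prod_(i < d) coord x i ^+ b i.

Definition dmonom (k : nat) (a : {ffun 'I_d -> 'I_3}) (b : {ffun 'I_d -> 'I_k})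
  (x : 'rV[R]_d) : R :=
  \prod_(i < d) (((b i : nat) ^_ (a i : nat))%:R * coord x i ^+ (b i - a i)).

(* A polynomial in Pi^d_q: a coefficient family over multi-indices with entries
   < q, whose coefficients vanish for total degree >= q. *)
Definition inPi (q : nat) (p : {ffun 'I_d -> 'I_q} -> R) : Prop :=
  forall b, (q <= mdeg b)%N -> p b = 0.

Definition peval (q : nat) (p : {ffun 'I_d -> 'I_q} -> R) (x : 'rV[R]_d) : R :=
  \sum_b p b * monom b x.

Definition pderiv (q : nat) (a : {ffun 'I_d -> 'I_3}) (p : {ffun 'I_d -> 'I_q} -> R)
  (x : 'rV[R]_d) : R :=
  \sum_b p b * dmonom a b x.

(* Second-order operator D f = sum_{|alpha|<=2} c_alpha d^alpha f, with
   coefficient functions c alpha : R^d -> R (only |alpha| <= 2 are used). *)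
Definition Dapply (c : {ffun 'I_d -> 'I_3} -> 'rV[R]_d -> R) (q : nat)
  (p : {ffun 'I_d -> 'I_q} -> R) (z : 'rV[R]_d) : R :=
  \sum_(a | (mdeg a <= 2)%N) c a z * pderiv a p z.

Definition mpow (a : {ffun 'I_d -> 'I_3}) (xi : 'rV[R]_d) : R := monom a xi.

Definition elliptic_at (c : {ffun 'I_d -> 'I_3} -> 'rV[R]_d -> R) (z : 'rV[R]_d) : Prop :=
  forall xi : 'rV[R]_d, xi != 0 ->
    0 < \sum_(a | mdeg a == 2%N) c a z * mpow a xi.

Definition exact_formula (c : {ffun 'I_d -> 'I_3} -> 'rV[R]_d -> R) (z : 'rV[R]_d)
  (N : nat) (X : 'I_N -> 'rV[R]_d) (w : 'I_N -> R) (q : nat) : Prop :=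
  forall p : {ffun 'I_d -> 'I_q} -> R, inPi p ->
    Dapply c p z = \sum_(j < N) w j * peval p (X j).

(* positivity, with x_1 = z the point of index ord0 *)
Definition positive_formula (N : nat) (w : 'I_N.+1 -> R) : Prop :=
  w ord0 < 0 /\ forall j : 'I_N.+1, j != ord0 -> 0 < w j.

Definition sqdist (x y : 'rV[R]_d) : R := \sum_(i < d) (coord x i - coord y i) ^+ 2.

Definition is_inf (S : R -> Prop) (r : R) : Prop :=
  (forall s, S s -> r <= s) /\ (forall m, (forall s, S s -> m <= s) -> m <= r).

(* rho_{q,D}(z,X,1,2) = inf { sum_j |w_j| ||x_j - z||_2^2 : w exact of order q } *)
Definition rho_set (c : {ffun 'I_d -> 'I_3} -> 'rV[R]_d -> R) (z : 'rV[R]_d)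
  (N : nat) (X : 'I_N -> 'rV[R]_d) (q : nat) : R -> Prop :=
  fun s => exists w : 'I_N -> R, exact_formula c z X w q /\
                       s = \sum_(j < N) `|w j| * sqdist (X j) z.

Definition twoE (i : 'I_d) : {ffun 'I_d -> 'I_3} :=
  [ffun j => if j == i then inord 2 else ord0].

Definition tauD (c : {ffun 'I_d -> 'I_3} -> 'rV[R]_d -> R) (z : 'rV[R]_d) : R :=
  2 * \sum_(i < d) c (twoE i) z.

End Defs.

(* Main.v *)
Require Import Defs.
From HB Require Import structures.
From mathcomp Require Import all_boot all_order all_algebra.
From mathcomp Require Import ring.
Import Order.TTheory GRing.Theory Num.Theory.
Local Open Scope ring_scope.

Section Proof.
Variables (R : realFieldType) (d n : nat) (z : 'rV[R]_d).

Definition Ei (m : nat) (i : 'I_d) : {ffun 'I_d -> 'I_n.+3} :=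
  [ffun k => if k == i then inord m else ord0].
Definition E0 : {ffun 'I_d -> 'I_n.+3} := [ffun=> ord0].

Definition pp (i : 'I_d) (b : {ffun 'I_d -> 'I_n.+3}) : R :=
  (b == Ei 2 i)%:R - 2 * Defs.coord z i * (b == Ei 1 i)%:R
  + Defs.coord z i ^+ 2 * (b == E0)%:R.
Definition pz (b : {ffun 'I_d -> 'I_n.+3}) : R := \sum_i pp i b.

Lemma sum_ind (u : {ffun 'I_d -> 'I_n.+3}) (g : {ffun 'I_d -> 'I_n.+3} -> R) :
  \sum_b ((b == u)%:R * g b) = g u.
Proof.
rewrite (bigD1 u) //= eqxx mul1r big1 ?addr0 // => b /negbTE ->.
by rewrite mul0r.
Qed.

Lemma mdegEi m i : (m < n.+3)%N -> mdeg (Ei m i) = m.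
Proof.
move=> hm; rewrite /mdeg (bigD1 i) //= big1 ?addn0.
  by rewrite ffunE eqxx inordK.
by move=> k /negbTE hk; rewrite ffunE hk.
Qed.

Lemma mdegE0 : mdeg E0 = 0%N.
Proof. by rewrite /mdeg big1 // => k _; rewrite ffunE. Qed.

Lemma inPi_pz : inPi pz.
Proof.
move=> b hb; rewrite /pz big1 // => i _; rewrite /pp.
have h2 : b != Ei 2 i by apply/eqP => e; move: hb; rewrite e mdegEi.
have h1 : b != Ei 1 i by apply/eqP => e; move: hb; rewrite e mdegEi.
have h0 : b != E0 by apply/eqP => e; move: hb; rewrite e mdegE0.
by rewrite (negbTE h2) (negbTE h1) (negbTE h0) !mulr0 subr0 addr0.
Qed.

Lemma supp_dmonom (a : {ffun 'I_d -> 'I_3}) (b : {ffun 'I_d -> 'I_n.+3}) i (x : 'rV[R]_d) :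
  (forall k, k != i -> b k = 0%N :> nat) ->
  dmonom a b x = (\prod_(k | k != i) ((a k == 0%N :> nat)%:R : R)) *
     (((b i : nat) ^_ (a i : nat))%:R * Defs.coord x i ^+ (b i - a i)).
Proof.
move=> hb; rewrite /dmonom (bigD1 i) //= mulrC; congr (_ * _).
apply: eq_bigr => k hk; rewrite hb // ffact0n sub0n expr0 mulr1.
by case: (a k : nat).
Qed.

Lemma supp_monom (b : {ffun 'I_d -> 'I_n.+3}) i (x : 'rV[R]_d) :
  (forall k, k != i -> b k = 0%N :> nat) ->
  monom b x = Defs.coord x i ^+ b i.
Proof.
move=> hb; rewrite /monom (bigD1 i) //= big1 ?mulr1 // => k hk.
by rewrite hb.
Qed.

Lemma Ei_supp m i k : k != i -> Ei m i k = 0%N :> nat.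
Proof. by rewrite ffunE => /negbTE ->. Qed.
Lemma E0_supp i k : k != i -> E0 k = 0%N :> nat.
Proof. by rewrite ffunE. Qed.
Lemma Ei_at m i : (m < n.+3)%N -> Ei m i i = m :> nat.
Proof. by move=> hm; rewrite ffunE eqxx inordK. Qed.

Lemma pderiv_pp a i (x : 'rV[R]_d) : pderiv a (pp i) x =
  dmonom a (Ei 2 i) x - 2 * Defs.coord z i * dmonom a (Ei 1 i) x
  + Defs.coord z i ^+ 2 * dmonom a E0 x.
Proof.
rewrite /pderiv /pp.
under eq_bigr => b _ do rewrite mulrDl mulrBl (mulrC (2 * _)) (mulrC (_ ^+ 2)) -!mulrA.
rewrite big_split big_split /= sumrN !sum_ind; ring.
Qed.

Lemma pderiv_ppz a i : pderiv a (pp i) z = 2 * (a == twoE i)%:R.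
Proof.
rewrite pderiv_pp (supp_dmonom _ _ _ _ (Ei_supp 2 i)) (supp_dmonom _ _ _ _ (Ei_supp 1 i))
  (supp_dmonom _ _ _ _ (E0_supp i)) !Ei_at // ffunE.
have tw : twoE i i = 2%N :> nat by rewrite /twoE ffunE eqxx inordK.
have [ea|ne] := eqVneq a (twoE i).
  have -> : \prod_(k | k != i) ((a k == 0%N :> nat)%:R : R) = 1.
    by rewrite big1 // => k hk; rewrite ea /twoE ffunE (negbTE hk).
  rewrite ea tw /= !mul1r (_ : (2 ^_ 2 = 2)%N) // (_ : (1 ^_ 2 = 0)%N) //.
  by rewrite !mul0r !mulr0 subr0 addr0 subnn expr0 mulr1.
rewrite mulr0.
set Q := \prod_(k | _) _.
have HQ : Q = \prod_(k | k != i) (a k == 0%N :> nat)%:R by [].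
clearbody Q.
case hai: (a i) => [[|[|[|m]]] Hm] //=.
- rewrite !ffactn0 !subn0 expr0 expr1; ring.
- rewrite (_ : (2 ^_ 1 = 2)%N) // (_ : (1 ^_ 1 = 1)%N) // (_ : (0 ^_ 1 = 0)%N) //.
  rewrite subnn expr0 expr1; ring.
- have : exists2 k, k != i & (a k : nat) != 0%N.
    case: (pickP (fun k => (k != i) && ((a k : nat) != 0%N))) => [k /andP[hk hak]|h].
      by exists k.
    exfalso; move/eqP: ne; apply.
    apply/ffunP => k; apply/val_inj; rewrite /twoE ffunE.
    have [->|hk] := eqVneq k i; first by rewrite hai /= inordK.
    by move: (h k); rewrite hk /= => /negbFE /eqP ->.
  move=> [k hk hak]; rewrite HQ (bigD1 k) //= (negbTE hak) !mul0r.
  by rewrite !mulr0 subrr add0r.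
Qed.



Lemma Dapply_pz c : Dapply c pz z = tauD c z.
Proof.
rewrite /Dapply /tauD.
have pdz a : pderiv a pz z = \sum_i 2 * (a == twoE i)%:R.
  rewrite -(eq_bigr _ (fun i _ => pderiv_ppz a i)) /pderiv /pz.
  rewrite exchange_big /=.
  apply: eq_bigr => b _; exact: mulr_suml.
under eq_bigr => a _ do rewrite pdz mulr_sumr.
rewrite exchange_big mulr_sumr; apply: eq_bigr => i _.
rewrite (bigD1 (twoE i)) /=; last first.
  rewrite /mdeg (bigD1 i) //= big1 ?addn0.
    by rewrite /twoE ffunE eqxx inordK.
  by move=> k hk; rewrite /twoE ffunE (negbTE hk).
rewrite eqxx big1 ?addr0; first by rewrite mulr1 mulrC.
by move=> a /andP[_ /negbTE ->]; rewrite !mulr0.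
Qed.

Lemma peval_pz (x : 'rV[R]_d) : peval pz x = sqdist x z.
Proof.
rewrite /peval /pz /sqdist.
rewrite (eq_bigr (fun b => \sum_i pp i b * monom b x)); last by move=> b _; rewrite mulr_suml.
rewrite exchange_big; apply: eq_bigr => i _ /=.
rewrite /pp.
under eq_bigr => b _ do rewrite mulrDl mulrBl (mulrC (2 * _)) (mulrC (_ ^+ 2)) -!mulrA.
rewrite big_split big_split /= sumrN !sum_ind.
rewrite (supp_monom _ _ _ (Ei_supp 2 i)) (supp_monom _ _ _ (Ei_supp 1 i))
  (supp_monom _ _ _ (E0_supp i)) !Ei_at // ffunE /= expr0 expr1.
rewrite /Defs.coord; ring.
Qed.

Lemma main_gen (c : {ffun 'I_d -> 'I_3} -> 'rV[R]_d -> R)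
  (N : nat) (X : 'I_N.+1 -> 'rV[R]_d) :
  X ord0 = z ->
  (exists w : 'I_N.+1 -> R, positive_formula w /\ exact_formula c z X w n.+3) ->
  is_inf (rho_set c z X n.+3) (tauD c z).
Proof.
move=> X0 [w0 [[w00 wpos] ex0]].
have sq0 x : 0 <= sqdist x z.
  by rewrite /sqdist sumr_ge0 // => i _; rewrite sqr_ge0.
have key w : exact_formula c z X w n.+3 ->
    tauD c z = \sum_(j < N.+1) w j * sqdist (X j) z.
  move=> ex; rewrite -Dapply_pz (ex _ inPi_pz).
  by apply: eq_bigr => j _; rewrite peval_pz.
split.
  move=> s [w [ex ->]]; rewrite (key w ex).
  apply: ler_sum => j _; apply: ler_wpM2r => //; exact: real_ler_norm (num_real _).
move=> m hm; apply: hm; exists w0; split => //.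
rewrite (key w0 ex0); apply: eq_bigr => j _.
have [->|hj] := eqVneq j ord0.
  by rewrite X0 /sqdist big1 ?mulr0 // => i _; rewrite subrr expr0n.
by rewrite ger0_norm // ltW // wpos.
Qed.

End Proof.

Theorem mainTheorem15 (R : realFieldType) (d : nat)
  (c : {ffun 'I_d -> 'I_3} -> 'rV[R]_d -> R) (z : 'rV[R]_d)
  (N : nat) (X : 'I_N.+1 -> 'rV[R]_d) (q : nat) :
  (q = 3%N \/ q = 4%N) ->
  elliptic_at c z ->
  injective X ->
  X ord0 = z ->
  (exists w : 'I_N.+1 -> R, positive_formula w /\ exact_formula c z X w q) ->
  is_inf (rho_set c z X q) (tauD c z).
Proof.
move=> [->|->] _ _.
- exact: (@main_gen R d 0 z c N X).
- exact: (@main_gen R d 1 z c N X).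
Qed.
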